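(* Let $\mathcal I$ index a finite set of strategies for the iterated Prisoner's Dilemma (payoffs normalized with $T=1$, $S=0$), and assume $P<\tfrac12$. Suppose the strategy indexed by $i^*$ is an extortionate strategy $\mathbf p^{i^*}$ (a firm non-exceptional zero-determinant strategy with $\bar\alpha>0$) together with initial defection. If for no other $j\in\mathcal I$ is $\mathbf p^j$ firm, then $i^*$ is an evolutionarily unstable strategy for the game $\{A_{ij}\}$, and the vertex $v(i^* )$ is a repellor of the replicator dynamics: there is $\epsilon>0$ such that $1>\pi_{i^*}\ge1-\epsilon$ implies $\frac{d\pi_{i^*}}{dt}<0$.
   Context: Iterated Prisoner's Dilemma with normalized payoffs $T=1>R>P>S=0$, $2R>1$; outcomes ordered $cc,cd,dc,dd$ (own play first); payoff vectors $\mathbf S_X=(R,0,1,P)$, $\mathbf S_Y=(R,1,0,P)$, $\mathbf 1=(1,1,1,1)$, $\mathbf e_{23}=(0,1,1,0)$. A memory-one strategy vector is $\mathbf p\in[0,1]^4$, $p_i$ being the probability of playing $c$ after the $i$-th outcome, outcomes labeled from the player's own perspective; it is firm if $p_4=0$. A strategy is such a vector together with an initial play. The X Press-Dyson vector $\mathbf p-(1,1,0,0)$ decomposes uniquely as $\alpha\mathbf S_X+\beta\mathbf S_Y+\gamma\mathbf 1+\delta\mathbf e_{23}$; $\mathbf p$ is a non-exceptional zero-determinant strategy if $\delta=0$ and $\gamma>0$, and then $\bar\alpha=\alpha/\gamma$. For $i,j\in\mathcal I$, $A_{ij}$ is the long-run (Cesàro-limit) average payoff of X when X uses strategy $i$ and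 Y uses strategy $j$. Replicator dynamics on the simplex $\Delta\subset\mathbb R^{\mathcal I}$: $\frac{d\pi_i}{dt}=\pi_i(A_{i\pi}-A_{\pi\pi})$, $A_{i\pi}=\sum_j\pi_jA_{ij}$, $A_{\pi\pi}=\sum_i\pi_iA_{i\pi}$; $v(i)$ is the vertex $\pi_i=1$. $i^*$ is an evolutionarily unstable strategy (EUS) if $A_{ji^*}>A_{i^*i^*}$ for all $j\ne i^*$. *)

(* Defs.v *)
From Stdlib Require Import Reals List Arith.
From Coquelicot Require Import Coquelicot.
Import ListNotations.
Open Scope R_scope.

Definition sumN (n : nat) (f : nat -> R) : R :=
  fold_right Rplus 0 (map f (seq 0 n)).

(* A strategy: memory-one vector p = (p1,p2,p3,p4) (cooperation probabilities
   after cc, cd, dc, dd, own play first) together with an initial play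
   (true = cooperate, false = defect). *)
Record strategy := mkStrategy {
  p1 : R; p2 : R; p3 : R; p4 : R;
  init : bool }.

Definition pv (s : strategy) (k : nat) : R :=
  match k with 0 => p1 s | 1 => p2 s | 2 => p3 s | _ => p4 s end.

Definition valid_strategy (s : strategy) : Prop :=
  forall k, (k < 4)%nat -> 0 <= pv s k <= 1.

Definition firm (s : strategy) : Prop := p4 s = 0.

(* p - (1,1,0,0) = alpha S_X + beta S_Y + gamma 1 + delta e23,
   with S_X = (R,0,1,P), S_Y = (R,1,0,P), 1 = (1,1,1,1), e23 = (0,1,1,0). *)
Definition PD_decomp (Rr Pp : R) (s : strategy) (alpha beta gamma delta : R) : Prop :=
  p1 s - 1 = alpha * Rr + beta * Rr + gamma /\
  p2 s - 1 = alpha * 0 + beta * 1 + gamma + delta /\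
  p3 s - 0 = alpha * 1 + beta * 0 + gamma + delta /\
  p4 s - 0 = alpha * Pp + beta * Pp + gamma.

Definition ZD_with_alpha_bar (Rr Pp : R) (s : strategy) (abar : R) : Prop :=
  exists alpha beta gamma, PD_decomp Rr Pp s alpha beta gamma 0 /\ 0 < gamma /\
    abar = alpha / gamma.

Definition extortionate (Rr Pp : R) (s : strategy) : Prop :=
  firm s /\ exists abar, ZD_with_alpha_bar Rr Pp s abar /\ 0 < abar.

Definition outcome (x y : bool) : nat :=
  match x, y with
  | true, true => 0%nat | true, false => 1%nat
  | false, true => 2%nat | false, false => 3%nat end.

(* The same outcome seen from Y's perspective. *)
Definition swap (k : nat) : nat :=
  match k with 1 => 2%nat | 2 => 1%nat | _ => k end.

Definition trans (sx sy : strategy) (k l : nat) : R :=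
  let a := pv sx k in
  let b := pv sy (swap k) in
  match l with
  | 0 => a * b | 1 => a * (1 - b) | 2 => (1 - a) * b | _ => (1 - a) * (1 - b) end.

Fixpoint dist (sx sy : strategy) (n : nat) (l : nat) : R :=
  match n with
  | 0 => if Nat.eqb l (outcome (init sx) (init sy)) then 1 else 0
  | S m => sumN 4 (fun k => dist sx sy m k * trans sx sy k l)
  end.

(* X's payoff vector S_X = (R, 0, 1, P) (T = 1, S = 0). *)
Definition SX (Rr Pp : R) (k : nat) : R :=
  match k with 0 => Rr | 1 => 0 | 2 => 1 | _ => Pp end.

Definition stage_payoff (Rr Pp : R) (sx sy : strategy) (n : nat) : R :=
  sumN 4 (fun k => dist sx sy n k * SX Rr Pp k).

Definition avg_payoff (Rr Pp : R) (sx sy : strategy) (N : nat) : R :=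
  sumN (S N) (stage_payoff Rr Pp sx sy) / INR (S N).

Definition longrun (Rr Pp : R) (sx sy : strategy) : R :=
  real (Lim_seq (avg_payoff Rr Pp sx sy)).

Definition Amat (Rr Pp : R) (strat : nat -> strategy) (i j : nat) : R :=
  longrun Rr Pp (strat i) (strat j).

Definition in_simplex (n : nat) (pi : nat -> R) : Prop :=
  (forall i, (i < n)%nat -> 0 <= pi i) /\ sumN n pi = 1.

Definition A_i_pi (n : nat) (A : nat -> nat -> R) (i : nat) (pi : nat -> R) : R :=
  sumN n (fun j => pi j * A i j).

Definition A_pi_pi (n : nat) (A : nat -> nat -> R) (pi : nat -> R) : R :=
  sumN n (fun i => pi i * A_i_pi n A i pi).

Definition replicator (n : nat) (A : nat -> nat -> R) (pi : nat -> R) (i : nat) : R :=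
  pi i * (A_i_pi n A i pi - A_pi_pi n A pi).

Definition EUS (n : nat) (A : nat -> nat -> R) (istar : nat) : Prop :=
  forall j, (j < n)%nat -> j <> istar -> A j istar > A istar istar.

Definition vertex_repellor (n : nat) (A : nat -> nat -> R) (istar : nat) : Prop :=
  exists eps, 0 < eps /\
    forall pi, in_simplex n pi -> 1 > pi istar -> pi istar >= 1 - eps ->
      replicator n A pi istar < 0.

(* Main.v *)
Require Import Defs.
From Stdlib Require Import Reals.
From Coquelicot Require Import Coquelicot.
Open Scope R_scope.
From Stdlib Require Import Lra Lia List Arith Classical.
Import Defs.

Lemma fold_plus_acc (l : list R) a : fold_right Rplus a l = fold_right Rplus 0 l + a.
Proof. induction l; simpl; [lra | rewrite IHl; lra]. Qed.

Lemma sumN_0 f : sumN 0 f = 0.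
Proof. reflexivity. Qed.

Lemma sumN_S n f : sumN (S n) f = sumN n f + f n.
Proof.
  unfold sumN. rewrite seq_S, map_app, fold_right_app. simpl.
  rewrite fold_plus_acc. lra.
Qed.

Lemma sumN_ext n f g : (forall i, (i < n)%nat -> f i = g i) -> sumN n f = sumN n g.
Proof.
  induction n; intros H; [reflexivity|]. rewrite !sumN_S, IHn, H; auto; lia.
Qed.

Lemma sumN_le n f g : (forall i, (i < n)%nat -> f i <= g i) -> sumN n f <= sumN n g.
Proof.
  induction n; intros H; [rewrite !sumN_0; lra|]. rewrite !sumN_S.
  assert (f n <= g n) by (apply H; lia). assert (sumN n f <= sumN n g) by (apply IHn; intros; apply H; lia). lra.
Qed.

Lemma sumN_plus n f g : sumN n (fun i => f i + g i) = sumN n f + sumN n g.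
Proof. induction n; [rewrite !sumN_0; lra| rewrite !sumN_S, IHn; lra]. Qed.

Lemma sumN_minus n f g : sumN n (fun i => f i - g i) = sumN n f - sumN n g.
Proof. induction n; [rewrite !sumN_0; lra| rewrite !sumN_S, IHn; lra]. Qed.

Lemma sumN_scal n c f : sumN n (fun i => c * f i) = c * sumN n f.
Proof. induction n; [rewrite !sumN_0; lra| rewrite !sumN_S, IHn; lra]. Qed.

Lemma sumN_const n c : sumN n (fun _ => c) = INR n * c.
Proof. induction n; [rewrite sumN_0; simpl; lra| rewrite sumN_S, IHn, S_INR; lra]. Qed.

Lemma sumN_tele n g : sumN n (fun i => g (S i) - g i) = g n - g 0%nat.
Proof. induction n; [rewrite sumN_0; lra| rewrite sumN_S, IHn; lra]. Qed.

Lemma sumN_pick n i f : (i < n)%nat ->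
  sumN n f = f i + sumN n (fun j => if Nat.eqb j i then 0 else f j).
Proof.
  intros Hi.
  assert (E: sumN n f = sumN n (fun j => (if Nat.eqb j i then f j else 0) + (if Nat.eqb j i then 0 else f j))).
  { apply sumN_ext; intros j _; destruct (Nat.eqb j i); lra. }
  rewrite E, sumN_plus. f_equal.
  clear E. induction n; [lia|]. rewrite sumN_S.
  destruct (Nat.eqb n i) eqn:En.
  - apply Nat.eqb_eq in En; subst.
    assert (sumN i (fun j => if Nat.eqb j i then f j else 0) = 0).
    { transitivity (sumN i (fun _ => 0)). apply sumN_ext; intros j Hj. destruct (Nat.eqb j i) eqn:E2; [apply Nat.eqb_eq in E2; lia | reflexivity]. rewrite sumN_const; lra. }
    lra.
  - apply Nat.eqb_neq in En. rewrite IHn by lia. lra.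
Qed.


Lemma valid4 s : valid_strategy s ->
  0 <= p1 s <= 1 /\ 0 <= p2 s <= 1 /\ 0 <= p3 s <= 1 /\ 0 <= p4 s <= 1.
Proof.
  intros H. pose proof (H 0%nat ltac:(lia)). pose proof (H 1%nat ltac:(lia)).
  pose proof (H 2%nat ltac:(lia)). pose proof (H 3%nat ltac:(lia)). simpl in *. tauto.
Qed.

Lemma dist_S sx sy n l : dist sx sy (S n) l =
  dist sx sy n 0 * trans sx sy 0 l + (dist sx sy n 1 * trans sx sy 1 l +
  (dist sx sy n 2 * trans sx sy 2 l + (dist sx sy n 3 * trans sx sy 3 l + 0))).
Proof. reflexivity. Qed.

Lemma dist_facts sx sy : valid_strategy sx -> valid_strategy sy -> forall n,
  0 <= dist sx sy n 0 /\ 0 <= dist sx sy n 1 /\ 0 <= dist sx sy n 2 /\ 0 <= dist sx sy n 3 /\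
  dist sx sy n 0 + dist sx sy n 1 + dist sx sy n 2 + dist sx sy n 3 = 1.
Proof.
  intros Hx Hy. apply valid4 in Hx, Hy.
  destruct Hx as (?&?&?&?). destruct Hy as (?&?&?&?).
  induction n.
  - simpl. destruct (init sx), (init sy); simpl; lra.
  - rewrite !dist_S. unfold trans. simpl.
    destruct IHn as (?&?&?&?&Hs).
    repeat split; try (repeat (first [lra | apply Rplus_le_le_0_compat | apply Rmult_le_pos])).
    all: try (rewrite <- Hs; ring).
Qed.

Lemma self_dist s : init s = false -> p4 s = 0 -> forall n,
  dist s s n 0 = 0 /\ dist s s n 1 = 0 /\ dist s s n 2 = 0 /\ dist s s n 3 = 1.
Proof.
  intros Hi Hp. induction n.
  - simpl. rewrite Hi. simpl. lra.
  - rewrite !dist_S. unfold trans. simpl. rewrite Hp. destruct IHn as (->&->&->&->). lra.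
Qed.

Lemma self_payoff Rr Pp s : init s = false -> p4 s = 0 -> longrun Rr Pp s s = Pp.
Proof.
  intros Hi Hp. unfold longrun.
  assert (E: forall N, avg_payoff Rr Pp s s N = Pp).
  { intros N. unfold avg_payoff.
    rewrite (sumN_ext _ _ (fun _ => Pp)).
    - rewrite sumN_const. field. apply not_0_INR. lia.
    - intros i _. unfold stage_payoff, sumN. simpl.
      destruct (self_dist s Hi Hp i) as (->&->&->&->). lra. }
  rewrite (Lim_seq_ext _ (fun _ => Pp)) by exact E. rewrite Lim_seq_const. reflexivity.
Qed.


Lemma prod_le d a b : 0 <= d -> 0 <= a <= 1 -> 0 <= b <= 1 -> d * ((1 - a) * (1 - b)) <= d.
Proof. intros. assert (0 <= (1-a)*(1-b) <= 1) by (split; nra). nra. Qed.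

Section Ext.
Variables (Rr Pp : R) (sx sy : strategy).
Hypotheses (HR1 : 1 > Rr) (HRP : Rr > Pp) (HP0 : Pp > 0) (H2R : 2 * Rr > 1) (HP2 : Pp < 1/2)
  (Vx : valid_strategy sx) (Vy : valid_strategy sy).
Variables (al be ga : R).
Hypotheses (D1 : p1 sy - 1 = al * Rr + be * Rr + ga)
  (D2 : p2 sy - 1 = al * 0 + be * 1 + ga + 0)
  (D3 : p3 sy - 0 = al * 1 + be * 0 + ga + 0)
  (D4 : p4 sy - 0 = al * Pp + be * Pp + ga) (Hf : p4 sy = 0).

Let d k n := dist sx sy n k.
Let Xp n := stage_payoff Rr Pp sx sy n.
Let Yp n := d 0%nat n * Rr + d 1%nat n + d 3%nat n * Pp.
Let Yc n := d 0%nat n + d 2%nat n.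
Let e n := d 0%nat n + d 1%nat n + d 2%nat n.

Lemma Xp_eq n : Xp n = d 0%nat n * Rr + d 2%nat n + d 3%nat n * Pp.
Proof. unfold Xp, stage_payoff, sumN. simpl. unfold d. ring. Qed.

Lemma L1 n : al * (Yp n - Pp) + be * (Xp n - Pp) = Yc (S n) - Yc n.
Proof.
  rewrite Xp_eq. unfold Yp, Yc, d. rewrite !dist_S. unfold trans. simpl.
  destruct (dist_facts sx sy Vx Vy n) as (_&_&_&_&Hs).
  assert (E1 : p1 sy = 1 + al * Rr + be * Rr + ga) by lra.
  assert (E2 : p2 sy = 1 + be + ga) by lra.
  assert (E3 : p3 sy = al + ga) by lra.
  assert (E4 : ga = - (al + be) * Pp) by lra.
  rewrite E1, E2, E3, Hf, E4.
  replace (dist sx sy n 3) with (1 - dist sx sy n 0 - dist sx sy n 1 - dist sx sy n 2) by lra.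
  ring.
Qed.

Lemma L2 n : e (S n) >= p4 sx * (1 - e n).
Proof.
  destruct (valid4 _ Vx) as (?&?&?&?). destruct (valid4 _ Vy) as (?&?&?&?).
  destruct (dist_facts sx sy Vx Vy n) as (?&?&?&?&Hs).
  destruct (dist_facts sx sy Vx Vy (S n)) as (?&?&?&?&Hs').
  assert (e (S n) = 1 - d 3%nat (S n)) by (unfold e, d; lra).
  assert (e n = 1 - d 3%nat n) by (unfold e, d; lra).
  assert (d 3%nat (S n) <= d 0%nat n + d 1%nat n + d 2%nat n + d 3%nat n * (1 - p4 sx)).
  { unfold d. rewrite dist_S. unfold trans. simpl. rewrite Hf.
    pose proof (prod_le (dist sx sy n 0) (p1 sx) (p1 sy)).
    pose proof (prod_le (dist sx sy n 1) (p2 sx) (p3 sy)).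
    pose proof (prod_le (dist sx sy n 2) (p3 sx) (p2 sy)).
    assert (dist sx sy n 3 * ((1 - p4 sx) * (1 - 0)) = dist sx sy n 3 * (1 - p4 sx)) by ring.
    intuition lra. }
  unfold d in *. nra.
Qed.

Lemma L3 n : Xp n + Yp n - 2 * Pp >= (1 - 2 * Pp) * e n.
Proof.
  rewrite Xp_eq. unfold Yp, e, d.
  destruct (dist_facts sx sy Vx Vy n) as (?&?&?&?&Hs).
  replace (dist sx sy n 3) with (1 - dist sx sy n 0 - dist sx sy n 1 - dist sx sy n 2) by lra.
  assert (dist sx sy n 0 * (2*Rr - 2*Pp) >= dist sx sy n 0 * (1 - 2*Pp)) by nra.
  nra.
Qed.

Lemma L4 n : 0 <= Yc n <= 1 /\ 0 <= e n <= 1 /\ 0 <= Xp n <= 1.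
Proof.
  rewrite Xp_eq. unfold Yc, e, d.
  destruct (dist_facts sx sy Vx Vy n) as (?&?&?&?&Hs).
  assert (0 <= dist sx sy n 0 * Rr <= dist sx sy n 0) by (split; nra).
  assert (0 <= dist sx sy n 3 * Pp <= dist sx sy n 3) by (split; nra).
  lra.
Qed.

Lemma sums N :
  al * sumN (S N) (fun n => Yp n - Pp) + be * sumN (S N) (fun n => Xp n - Pp) = Yc (S N) - Yc 0%nat
  /\ sumN (S N) e * (1 + p4 sx) >= p4 sx * INR (S N) - 1
  /\ sumN (S N) (fun n => Xp n - Pp) + sumN (S N) (fun n => Yp n - Pp) >= (1 - 2 * Pp) * sumN (S N) e.
Proof.
  split; [|split].
  - rewrite <- !sumN_scal, <- sumN_plus. rewrite <- (sumN_tele (S N) Yc).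
    apply sumN_ext. intros i _. apply L1.
  - assert (A1: sumN (S N) (fun n => e (S n)) >= p4 sx * sumN (S N) (fun n => 1 - e n)).
    { rewrite <- sumN_scal. apply Rle_ge, sumN_le. intros i _. apply Rge_le, L2. }
    rewrite sumN_minus, sumN_const in A1.
    assert (A2: sumN (S N) (fun n => e (S n)) = sumN (S N) e + e (S N) - e 0%nat).
    { pose proof (sumN_tele (S N) e) as T. rewrite sumN_minus in T. lra. }
    destruct (L4 (S N)) as (_&?&_). destruct (L4 0%nat) as (_&?&_).
    destruct (valid4 _ Vx) as (?&?&?&?). nra.
  - rewrite <- sumN_plus, <- sumN_scal. apply Rle_ge, sumN_le. intros i _.
    pose proof (L3 i). lra.
Qed.

Lemma ext_main : al > 0 -> be < 0 -> p4 sx > 0 -> longrun Rr Pp sx sy > Pp.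
Proof.
  intros Hal Hbe Hq.
  set (q := p4 sx) in *. set (c := 1 - 2 * Pp).
  assert (Hc : c > 0) by (unfold c; lra).
  set (K := al * c / (1 + q)).
  assert (HK : K > 0) by (unfold K; apply Rdiv_lt_0_compat; nra).
  set (del := K * q / (2 * (al - be))).
  assert (Hdel : del > 0) by (unfold del; apply Rdiv_lt_0_compat; nra).
  destruct (INR_unbounded (2 * (K + 1) / (K * q))) as [N0 HN0].
  assert (EV : Hierarchy.eventually (fun N => Pp + del <= avg_payoff Rr Pp sx sy N)).
  { exists N0. intros N HN.
    assert (Hm : INR (S N) >= INR N0) by (apply Rle_ge, le_INR; lia).
    set (m := INR (S N)) in *.
    assert (Hm0 : m > 0) by (unfold m; apply lt_0_INR; lia).
    destruct (sums N) as (S1 & S2 & S3). fold q in S2. fold c in S3. change (INR (S N)) with m in S2.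
    set (SX := sumN (S N) (fun n => Xp n - Pp)) in *.
    set (SY := sumN (S N) (fun n => Yp n - Pp)) in *.
    set (E := sumN (S N) e) in *.
    destruct (L4 (S N)) as (?&_). destruct (L4 0%nat) as (?&_).
    assert (T1 : al * c * E <= (al - be) * SX + 1).
    { assert (al * (c * E) <= al * (SX + SY)) by (apply Rmult_le_compat_l; lra). nra. }
    assert (T2 : al * c * E * (1 + q) >= al * c * (q * m - 1)).
    { assert (al * c * (E * (1 + q)) >= al * c * (q * m - 1)).
      { apply Rle_ge, Rmult_le_compat_l; [nra | lra]. } nra. }
    assert (T3 : al * c * E >= K * (q * m - 1)).
    { unfold K. apply Rle_ge. apply (Rmult_le_reg_r (1 + q)); [lra|].
      field_simplify; [|lra]. lra. }
    assert (T4 : K * q * m >= 2 * (K + 1)).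
    { assert (m > 2 * (K + 1) / (K * q)) by lra.
      assert (Hx : m * (K * q) > 2 * (K + 1) / (K * q) * (K * q)) by (apply Rmult_gt_compat_r; nra).
      field_simplify in Hx; nra. }
    assert (T5 : (al - be) * SX >= (al - be) * (del * m)).
    { unfold del. field_simplify; [|lra]. lra. }
    assert (T6 : SX >= del * m).
    { apply Rle_ge. apply (Rmult_le_reg_l (al - be)); lra. }
    unfold avg_payoff. fold m.
    assert (Hy : sumN (S N) (stage_payoff Rr Pp sx sy) = SX + m * Pp).
    { unfold SX. rewrite sumN_minus, sumN_const. fold m. unfold Xp. change (fun n => stage_payoff Rr Pp sx sy n) with (stage_payoff Rr Pp sx sy). lra. }
    rewrite Hy. apply (Rmult_le_reg_r m); [lra|]. field_simplify; lra. }
  assert (UB : Hierarchy.eventually (fun N => avg_payoff Rr Pp sx sy N <= 1)).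
  { exists 0%nat. intros N _. unfold avg_payoff.
    assert (sumN (S N) (stage_payoff Rr Pp sx sy) <= sumN (S N) (fun _ => 1)).
    { apply sumN_le. intros i _. destruct (L4 i) as (_&_&?). unfold Xp in *. lra. }
    rewrite sumN_const in H.
    assert (INR (S N) > 0) by (apply lt_0_INR; lia).
    apply (Rmult_le_reg_r (INR (S N))); [lra|]. field_simplify; lra. }
  apply Lim_seq_le_loc in EV. apply Lim_seq_le_loc in UB.
  rewrite Lim_seq_const in EV, UB. unfold longrun.
  destruct (Lim_seq (avg_payoff Rr Pp sx sy)) as [r| |]; simpl in *; try contradiction. lra.
Qed.
End Ext.


Lemma fin_pos_lb n (P : nat -> Prop) (g : nat -> R) :
  (forall i, (i < n)%nat -> P i -> g i > 0) ->
  exists d, d > 0 /\ forall i, (i < n)%nat -> P i -> g i >= d.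
Proof.
  induction n; intros H.
  - exists 1. split; [lra | intros; lia].
  - destruct IHn as (d & Hd & Hd'). { intros; apply H; auto; lia. }
    destruct (classic (P n)) as [Pn | Pn].
    + assert (g n > 0) by (apply H; auto).
      exists (Rmin d (g n)). split. { apply Rmin_pos; lra. }
      intros i Hi Pi. destruct (Nat.eq_dec i n) as [->|Hne].
      * pose proof (Rmin_r d (g n)). lra.
      * pose proof (Rmin_l d (g n)). assert (g i >= d) by (apply Hd'; auto; lia). lra.
    + exists d. split; auto. intros i Hi Pi. destruct (Nat.eq_dec i n) as [->|Hne]; [contradiction|].
      apply Hd'; auto; lia.
Qed.

Lemma bound1 n (h : nat -> R) : exists M, forall i, (i < n)%nat -> h i <= M.
Proof.
  induction n.
  - exists 0. intros; lia.
  - destruct IHn as [M HM]. exists (Rmax M (h n)). intros i Hi.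
    destruct (Nat.eq_dec i n) as [->|Hne]; [apply Rmax_r|].
    pose proof (Rmax_l M (h n)). pose proof (HM i ltac:(lia)). lra.
Qed.

Lemma bound2 n (g : nat -> nat -> R) : exists M, M >= 0 /\
  forall i j, (i < n)%nat -> (j < n)%nat -> Rabs (g i j) <= M.
Proof.
  induction n.
  - exists 0. split; [lra | intros; lia].
  - destruct IHn as (M & HM0 & HM).
    destruct (bound1 (S n) (fun j => Rabs (g n j))) as [M1 HM1].
    destruct (bound1 (S n) (fun i => Rabs (g i n))) as [M2 HM2].
    exists (Rmax M (Rmax M1 M2)). split.
    { pose proof (Rmax_l M (Rmax M1 M2)). lra. }
    intros i j Hi Hj.
    pose proof (Rmax_l M (Rmax M1 M2)). pose proof (Rmax_r M (Rmax M1 M2)).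
    pose proof (Rmax_l M1 M2). pose proof (Rmax_r M1 M2).
    destruct (Nat.eq_dec i n) as [->|Hi'].
    { pose proof (HM1 j Hj). simpl in *. lra. }
    destruct (Nat.eq_dec j n) as [->|Hj'].
    { pose proof (HM2 i Hi). simpl in *. lra. }
    pose proof (HM i j ltac:(lia) ltac:(lia)). lra.
Qed.

Lemma repellor_of_EUS n A istar : (istar < n)%nat -> EUS n A istar -> vertex_repellor n A istar.
Proof.
  intros Hi HE.
  destruct (fin_pos_lb n (fun i => i <> istar) (fun i => A i istar - A istar istar)) as (d & Hd & Hd').
  { intros i Hi' Hne. pose proof (HE i Hi' Hne). lra. }
  destruct (bound2 n A) as (M & HM0 & HM).
  set (eps := Rmin (1/2) (d / (8 * (M + 1)))).
  assert (He1 : eps <= 1/2) by apply Rmin_l.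
  assert (He2 : eps <= d / (8 * (M + 1))) by apply Rmin_r.
  assert (He0 : eps > 0) by (apply Rmin_pos; [lra | apply Rdiv_lt_0_compat; lra]).
  assert (HMe : 2 * M * eps <= d / 4).
  { assert (2 * M * eps <= 2 * M * (d / (8 * (M + 1)))) by (apply Rmult_le_compat_l; lra).
    assert (2 * M * (d / (8 * (M + 1))) <= d / 4).
    { apply (Rmult_le_reg_r (8 * (M + 1))); [lra|]. field_simplify; nra. }
    lra. }
  exists eps. split; auto.
  intros pi [Hpos Hsum] H1 H2.
  set (x := pi istar) in *.
  assert (Hrest : sumN n (fun j => if Nat.eqb j istar then 0 else pi j) = 1 - x).
  { pose proof (sumN_pick n istar pi Hi). fold x in H. lra. }
  assert (Key : forall i, (i < n)%nat -> i <> istar ->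
    A_i_pi n A istar pi - A_i_pi n A i pi <= - d / 4).
  { intros i Hin Hne. unfold A_i_pi. rewrite <- sumN_minus.
    rewrite (sumN_ext n _ (fun j => pi j * (A istar j - A i j))) by (intros; ring).
    rewrite (sumN_pick n istar) by auto. fold x.
    assert (S1 : x * (A istar istar - A i istar) <= - x * d).
    { pose proof (Hd' i Hin Hne). assert (0 <= x) by (apply Hpos; auto). nra. }
    assert (S2 : sumN n (fun j => if Nat.eqb j istar then 0 else pi j * (A istar j - A i j))
                 <= sumN n (fun j => 2 * M * (if Nat.eqb j istar then 0 else pi j))).
    { apply sumN_le. intros j Hj. destruct (Nat.eqb j istar); [lra|].
      pose proof (HM istar j Hi Hj). pose proof (HM i j Hin Hj).
      pose proof (Rle_abs (A istar j)). pose proof (Rabs_maj2 (A i j)).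
      pose proof (Rle_abs (A i j)). pose proof (Rabs_maj2 (A istar j)).
      assert (0 <= pi j) by (apply Hpos; auto).
      assert (pi j * (A istar j - A i j) <= pi j * (2 * M)) by (apply Rmult_le_compat_l; lra).
      lra. }
    rewrite sumN_scal, Hrest in S2.
    assert (2 * M * (1 - x) <= 2 * M * eps) by (apply Rmult_le_compat_l; lra).
    assert (- x * d <= - d / 2) by nra.
    lra. }
  assert (Diff : A_i_pi n A istar pi - A_pi_pi n A pi <= - d / 4 * (1 - x)).
  { assert (E : A_i_pi n A istar pi - A_pi_pi n A pi =
                sumN n (fun i => pi i * (A_i_pi n A istar pi - A_i_pi n A i pi))).
    { rewrite (sumN_ext n _ (fun i => A_i_pi n A istar pi * pi i - pi i * A_i_pi n A i pi)) by (intros; ring).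
      rewrite sumN_minus, sumN_scal, Hsum. unfold A_pi_pi. ring. }
    rewrite E, (sumN_pick n istar) by auto. fold x.
    assert (sumN n (fun j => if Nat.eqb j istar then 0 else pi j * (A_i_pi n A istar pi - A_i_pi n A j pi))
            <= sumN n (fun j => - d / 4 * (if Nat.eqb j istar then 0 else pi j))).
    { apply sumN_le. intros j Hj. destruct (Nat.eqb j istar) eqn:Ej; [lra|].
      apply Nat.eqb_neq in Ej. pose proof (Key j Hj Ej).
      assert (0 <= pi j) by (apply Hpos; auto). nra. }
    rewrite sumN_scal, Hrest in H. ring_simplify. lra. }
  unfold replicator. fold x.
  assert (x > 0) by lra. assert (1 - x > 0) by lra.
  assert (- d / 4 * (1 - x) < 0) by nra.
  nra.
Qed.


Theorem theorem4p10 (Rr Pp : R) (n : nat) (strat : nat -> strategy) (istar : nat) :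
  1 > Rr -> Rr > Pp -> Pp > 0 -> 2 * Rr > 1 -> Pp < 1 / 2 ->
  (forall i, (i < n)%nat -> valid_strategy (strat i)) ->
  (istar < n)%nat ->
  extortionate Rr Pp (strat istar) ->
  init (strat istar) = false ->
  (forall j, (j < n)%nat -> j <> istar -> ~ firm (strat j)) ->
  EUS n (Amat Rr Pp strat) istar /\ vertex_repellor n (Amat Rr Pp strat) istar.
Proof.
  intros HR1 HRP HP0 H2R HP2 Hv Hi Hext Hinit Hnf.
  destruct Hext as (Hf & abar & (al & be & ga & (D1 & D2 & D3 & D4) & Hga & Hab) & Habar).
  unfold firm in Hf.
  assert (Hal : al > 0).
  { assert (al = abar * ga) by (rewrite Hab; field; lra). subst abar. nra. }
  destruct (valid4 _ (Hv istar Hi)) as (_ & Hp2 & _ & _).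
  assert (Hbe : be < 0) by lra.
  assert (HE : EUS n (Amat Rr Pp strat) istar).
  { intros j Hj Hne. unfold Amat. rewrite self_payoff by auto.
    destruct (valid4 _ (Hv j Hj)) as (_ & _ & _ & Hq).
    assert (p4 (strat j) <> 0) by (apply (Hnf j Hj Hne)).
    apply (ext_main Rr Pp (strat j) (strat istar) HR1 HP0 H2R HP2 (Hv j Hj) (Hv istar Hi) al be ga);
      auto; lra. }
  split; auto. apply repellor_of_EUS; auto.
Qed.
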